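(* Let $q$ be a prime power, let $G=\{g_1,\dots,g_n\}$ be a finite group of order $n$ (with this fixed ordering), let $v\in\mathbb{F}_qG$, and let $C(v)\subseteq\mathbb{F}_q^n$ be the row space of $\sigma_G(v)$. Suppose $|\mathrm{PAut}(C(v))|=n$ and $\pi\in\mathrm{PAut}(C(v))$ is of type $p$-$(c,f)$ with $p\neq1$. Then $f=0$; that is, $\pi$ has no fixed points (so $p$ is the order of $\pi$ and $n=pc$).
   Context: $\mathbb{F}_qG$ is the group ring; an element $v=\sum_i\alpha_{g_i}g_i$ is identified with the vector $(\alpha_{g_1},\dots,\alpha_{g_n})\in\mathbb{F}_q^n$. The group ring matrix $\sigma_G(v)$ is the $n\times n$ matrix whose $(i,j)$ entry is $\alpha_{g_i^{-1}g_j}$. For a code $\mathcal{C}\subseteq\mathbb{F}_q^n$, $\mathrm{PAut}(\mathcal{C})=\{\pi\in S_n:\pi(\mathcal{C})=\mathcal{C}\}$, where $S_n$ acts by permuting coordinates. A permutation $\pi\in S_n$ is of type $p$-$(c,f)$ if its disjoint cycle decomposition consists of exactly $c$ cycles of length $p$ and $f$ fixed points (and no other cycles). *)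

(* Defs.v *)
From HB Require Import structures.
From mathcomp Require Import all_boot all_order all_algebra all_fingroup all_field.
Set Implicit Arguments. Unset Strict Implicit. Unset Printing Implicit Defensive.
Import GRing.Theory.
Local Open Scope ring_scope.

(* Group ring matrix sigma_G(v) w.r.t. the ordering g : 'I_n -> gT of the group:
   (i,j) entry is v (g_i^-1 g_j).  An element v of F_q G is its coefficient
   function gT -> F. *)
Definition group_ring_mx (F : fieldType) (gT : finGroupType) (n : nat)
  (g : 'I_n -> gT) (v : gT -> F) : 'M[F]_n :=
  \matrix_(i < n, j < n) v ((g i)^-1 * g j)%g.

(* Permutation automorphism group of the code C = row space of M:
   permutations s of the n coordinates with s(C) = C. *)
Definition PAut (F : fieldType) (m n : nat) (M : 'M[F]_(m, n)) : {set 'S_n} :=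
  [set s : 'S_n | (col_perm s M == M)%MS].

Definition is_cycle_type (n : nat) (s : 'S_n) (p c f : nat) : Prop :=
  [/\ forall O, O \in porbits s -> (#|O| == p) || (#|O| == 1%N),
      #|[set O in porbits s | #|O| == p]| = c &
      #|[set O in porbits s | #|O| == 1%N]| = f].

(* Main.v *)
Require Import Defs.
From HB Require Import structures.
From mathcomp Require Import all_boot all_order all_algebra all_fingroup all_field.
Set Implicit Arguments. Unset Strict Implicit. Unset Printing Implicit Defensive.
Import GRing.Theory.

Section Aux.
Variables (F : fieldType) (gT : finGroupType) (n : nat) (g : 'I_n -> gT) (gi : gT -> 'I_n).
Hypotheses (gK : cancel g gi) (giK : cancel gi g).

Definition Lf (h : gT) (j : 'I_n) : 'I_n := gi (h * g j)%g.
Lemma Lf_inj h : injective (Lf h).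
Proof. by move=> a b /(canRL giK); rewrite giK => /mulgI /(can_inj gK). Qed.
Definition Lp (h : gT) : 'S_n := perm (@Lf_inj h).

Lemma Lp_in (v : gT -> F) h : Lp h \in PAut (group_ring_mx g v).
Proof.
rewrite inE; apply/eqmxMunitP; exists (perm_mx (Lp h^-1)); first exact: unitmx_perm.
rewrite -row_permE; apply/matrixP => i j; rewrite !mxE !permE /Lf !giK.
by rewrite invMg invgK mulgA.
Qed.

Lemma Lp_inj : injective Lp.
Proof.
move=> a b eq.
have [x _] : exists x : gT, true by exists 1%g.
have := congr1 (fun s : 'S_n => g (s (gi x))) eq.
by rewrite /= !permE /Lf !giK => /mulIg.
Qed.
End Aux.

Theorem theorem4p2 (F : finFieldType) (gT : finGroupType) (n : nat)
  (g : 'I_n -> gT) (v : gT -> F) (s : 'S_n) (p c f : nat) :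
  n = #|gT| -> bijective g ->
  #|PAut (group_ring_mx g v)| = n ->
  s \in PAut (group_ring_mx g v) ->
  is_cycle_type s p c f -> p != 1%N -> (0 < c)%N ->
  f = 0%N.
Proof.
move=> hn [gi gK giK] hcard hs [_ hc hf] hp1 hc0.
have sub : [set Lp gK giK h | h : gT] \subset PAut (group_ring_mx g v).
  by apply/subsetP => _ /imsetP[h _ ->]; exact: Lp_in.
have eqS : [set Lp gK giK h | h : gT] = PAut (group_ring_mx g v).
  apply/eqP; rewrite eqEcard sub hcard card_imset //; last exact: Lp_inj.
  by rewrite /= -{1}hn.
move: hs; rewrite -eqS => /imsetP[h _ hs].
have fix1 : forall x, s x = x -> #|porbit s x| = 1%N.
  move=> x sx; apply/eqP/cards1P; exists x; apply/setP => y; rewrite inE.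
  apply/idP/eqP => [/porbitP[i ->]|->]; last exact: porbit_id.
  by elim: i => [|i IH]; rewrite ?perm1 // expgSr permM IH.
have orb1 : forall O, O \in porbits s -> #|O| = 1%N -> exists2 x, O = porbit s x & s x = x.
  move=> O /imsetP[x _ ->] h1; exists x => //.
  have := mem_porbit s 1 x; rewrite expg1.
  have /cards1P[y hy] : #|porbit s x| == 1%N by rewrite h1.
  by rewrite hy !inE => /eqP ->; move: (porbit_id s x); rewrite hy inE => /eqP ->.
case: (eqVneq h 1%g) => [h1|hn1].
  have s1 : forall x, s x = x by move=> x; rewrite hs h1 permE /Lf mul1g gK.
  move: hc0; rewrite -hc card_gt0 => /set0Pn[O]; rewrite !inE => /andP[hO hOp].
  case/imsetP: hO => x _ HO; move: hOp; rewrite HO fix1 // eq_sym.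
  by rewrite (negPf hp1).
apply/eqP; rewrite -hf cards_eq0; apply/eqP/setP => O; rewrite !inE.
apply/negbTE/negP => /andP[hO /eqP h1].
have [x _ sx] := orb1 O hO h1.
move: sx; rewrite hs permE /Lf => /(congr1 g); rewrite giK.
move=> /(canRL (mulgK (g x))); rewrite mulgV => H; by rewrite H eqxx in hn1.
Qed.
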